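(* Assume the setting below, on the Shishkin mesh $S_N$ (i.e. $\lambda=N$) with mesh parameter $a\ge a_*:=\dfrac{\beta}{b(0)-\beta}$. Then the truncation error of $v$ satisfies \[ |\tau_i[v]|\le C\begin{cases} N^{-2}(\ln N)^2e^{-\beta x_i/\varepsilon}, & 1\le i\le J-1,\\ N^{-a}, & J\le i\le N-1,\end{cases} \] with $C$ independent of $\varepsilon$ and $N$.
   Context: Let $0<\varepsilon<1$. Let $b,c,f\in C^4[0,1]$, and let $\beta$ be a constant with $b(x)>\beta>0$ and $c(x)\ge0$ on $[0,1]$. Let $u$ be the solution of $-\varepsilon u''-bu'+cu=f$ on $(0,1)$ with $u(0)=u(1)=0$. Define \[ v(x)=-\frac{\varepsilon u'(0)}{b(0)}e^{-b(0)x/\varepsilon}. \] Mesh $S_\lambda$, $\lambda\in\{N,\varepsilon^{-1}\}$. $N$ is a positive integer. $Q\in(0,1)$ is a fixed rational with $J=QN$ an integer, and $a>0$. Set $\xi=(a\varepsilon/\beta)\ln\lambda$, assumed $\le Q$, and $h=\xi/J$, $H=(1-\xi)/(N-J)$. The mesh points are $x_i=ih$ ($0\le i\le J$) and $x_i=\xi+(i-J)H$ ($J\le i\le N$). Write $h_i=x_i-x_{i-1}$ and $\hbar_i=(h_i+h_{i+1})/2$. Define $D^+g(x_i)=(g(x_{i+1})-g(x_i))/h_{i+1}$, $D^-g(x_i)=(g(x_i)-g(x_{i-1}))/h_i$, $D''g(x_i)=(D^+g(x_i)-D^-g(x_i))/\hbar_i$. Let $\sigma(\rho)=2\rho/(e^{2\rho}-1)$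 for $\rho>0$, $\sigma(0)=1$, and $\rho_i=b(x_i)h_{i+1}/(2\varepsilon)$. The truncation error of the ASI scheme is \[ \tau_i[g]=-\varepsilon\sigma(\rho_i)D''g(x_i)-b(x_i)D^+g(x_i)+\varepsilon g''(x_i)+b(x_i)g'(x_i),\qquad 1\le i\le N-1. \] *)

(* Defs.v *)
From Stdlib Require Import Reals Lra.
From Coquelicot Require Import Coquelicot.
Open Scope R_scope.

Definition C4_01 (g : R -> R) : Prop :=
  (forall k : nat, (k <= 4)%nat -> forall x, 0 <= x <= 1 -> ex_derive_n g k x) /\
  (forall x, 0 <= x <= 1 -> continuous (Derive_n g 4) x).

Definition is_solution (eps : R) (b c f u : R -> R) : Prop :=
  (forall x, 0 <= x <= 1 -> ex_derive u x /\ ex_derive (Derive u) x) /\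
  (forall x, 0 <= x <= 1 -> continuous (Derive_n u 2) x) /\
  (forall x, 0 < x < 1 ->
     - eps * Derive_n u 2 x - b x * Derive u x + c x * u x = f x) /\
  u 0 = 0 /\ u 1 = 0.

Definition vfun (eps : R) (b u : R -> R) (x : R) : R :=
  - (eps * Derive u 0 / b 0) * exp (- b 0 * x / eps).

Definition xi (beta a eps lambda : R) : R := (a * eps / beta) * ln lambda.

Definition mesh (beta a eps lambda : R) (N J : nat) (i : nat) : R :=
  let xi0 := xi beta a eps lambda in
  if (i <=? J)%nat then INR i * (xi0 / INR J)
  else xi0 + (INR i - INR J) * ((1 - xi0) / (INR N - INR J)).

Definition sigma (rho : R) : R :=
  if Req_EM_T rho 0 then 1 else 2 * rho / (exp (2 * rho) - 1).

(* Truncation error tau_i[g] of the ASI scheme (i >= 1). *)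
Definition tau (beta a eps lambda : R) (N J : nat) (b g : R -> R) (i : nat) : R :=
  let x := mesh beta a eps lambda N J in
  let hi := x i - x (i - 1)%nat in
  let hi1 := x (S i) - x i in
  let hbar := (hi + hi1) / 2 in
  let Dp := (g (x (S i)) - g (x i)) / hi1 in
  let Dm := (g (x i) - g (x (i - 1)%nat)) / hi in
  let D2 := (Dp - Dm) / hbar in
  let rho := b (x i) * hi1 / (2 * eps) in
  - eps * sigma rho * D2 - b (x i) * Dp
  + eps * Derive_n g 2 (x i) + b (x i) * Derive g (x i).

(* Main.v *)
Require Import Defs.
From Stdlib Require Import Reals.
From Coquelicot Require Import Coquelicot.
From Stdlib Require Import Lra Psatz.
Open Scope R_scope.


Lemma mvt_bound (f df : R -> R) (a b M : R) :
  (forall x, Rmin a b < x < Rmax a b -> is_derive f x (df x)) ->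
  (forall x, Rmin a b <= x <= Rmax a b -> continuous f x) ->
  (forall x, Rmin a b <= x <= Rmax a b -> Rabs (df x) <= M) ->
  Rabs (f b - f a) <= M * Rabs (b - a).
Proof.
  intros Hd Hc Hb.
  destruct (MVT_gen f a b df Hd) as [c [Hc1 Hc2]].
  - intros x Hx. apply continuity_pt_filterlim. apply Hc. exact Hx.
  - rewrite Hc2, Rabs_mult. apply Rmult_le_compat_r. apply Rabs_pos. apply Hb. exact Hc1.
Qed.

Lemma mvt_bound' (f df : R -> R) (a b M : R) :
  (forall x, Rmin a b <= x <= Rmax a b -> is_derive f x (df x)) ->
  (forall x, Rmin a b <= x <= Rmax a b -> Rabs (df x) <= M) ->
  Rabs (f b - f a) <= M * Rabs (b - a).
Proof.
  intros Hd Hb. apply mvt_bound with df; auto.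
  - intros x Hx; apply Hd; lra.
  - intros x Hx. apply (@ex_derive_continuous R_AbsRing R_NormedModule f x). exists (df x). apply Hd; auto.
Qed.

Lemma exp_lower4 z : 0 <= z -> z ^ 4 <= 256 * exp z.
Proof.
  intros Hz.
  assert (E : exp z = exp (z/4) ^ 4).
  { simpl. rewrite Rmult_1_r, <- !exp_plus. f_equal. field. }
  rewrite E. assert (H1 := exp_ineq1_le (z/4)).
  assert (H2 : 0 <= z/4) by lra.
  assert (H3: (z/4)^4 <= exp (z/4) ^ 4) by (apply pow_incr; lra).
  replace (z^4) with (256 * (z/4)^4) by field. lra.
Qed.

Lemma y_exp d y : 0 < d -> 0 <= y -> y * exp (- (d * y)) <= / d.
Proof.
  intros Hd Hy. assert (H := exp_ineq1_le (d*y)).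
  assert (Hp := exp_pos (d*y)).
  rewrite exp_Ropp.
  apply Rmult_le_reg_l with (d * exp (d*y)). apply Rmult_lt_0_compat; lra.
  field_simplify; nra.
Qed.

Lemma y4_exp d y : 0 < d -> 0 <= y -> y ^ 4 * exp (- (d * y)) <= 256 / d ^ 4.
Proof.
  intros Hd Hy. assert (H := exp_lower4 (d*y) ltac:(nra)).
  assert (Hp := exp_pos (d*y)).
  rewrite exp_Ropp.
  assert (Hd4 : 0 < d^4) by (apply pow_lt; lra).
  apply Rmult_le_reg_l with (d^4 * exp (d*y)). apply Rmult_lt_0_compat; lra.
  field_simplify; try lra.
Qed.

Lemma ln_le_x x : 0 < x -> ln x <= x.
Proof.
  intros Hx. assert (H := exp_ineq1_le x).
  destruct (Rle_dec (ln x) x) as [h1|h1]; auto. apply Rnot_le_lt in h1.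
  assert (exp x < exp (ln x)) by (apply exp_increasing; lra).
  rewrite exp_ln in H0 by lra. lra.
Qed.

Lemma exp_le_mono x y : x <= y -> exp x <= exp y.
Proof. intros H. destruct (Req_dec x y) as [->|Hn]. lra. left. apply exp_increasing. lra. Qed.

Lemma expm1_ge s : 0 <= s -> s <= exp s - 1.
Proof. intros Hs; assert (H := exp_ineq1_le s); lra. Qed.

Lemma sinh_bound z : 0 <= z -> 0 <= exp z - exp (- z) <= 2 * z * exp z.
Proof.
  intros Hz. assert (H1 := exp_ineq1_le (- (2*z))).
  assert (E : exp (-z) = exp z * exp (- (2*z))) by (rewrite <- exp_plus; f_equal; ring).
  assert (Hp := exp_pos z). assert (Hm : exp (- (2*z)) <= 1).
  { rewrite <- exp_0. destruct (Req_dec z 0). subst. replace (-(2*0)) with 0 by ring. lra.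
    left. apply exp_increasing. lra. }
  rewrite E. split; nra.
Qed.

Definition sg (s : R) := s / (exp s - 1).
Definition F0 (s t : R) := sg s * (exp t + exp (-t) - 2) + s*(exp(-t) - 1) + t*(s - t).

Lemma sg_bounds s : 0 < s -> 0 < sg s <= 1.
Proof.
  intros Hs. unfold sg. assert (H := expm1_ge s ltac:(lra)).
  split. apply Rdiv_lt_0_compat; lra.
  apply Rmult_le_reg_r with (exp s - 1). lra. field_simplify; lra.
Qed.

Lemma phi_bound s T0 : 0 < s <= T0 ->
  Rabs (s * exp s + s - 2 * exp s + 2) <= exp T0 * s ^ 3.
Proof.
  intros Hs.
  set (phi := fun z => z * exp z + z - 2 * exp z + 2).
  set (phi1 := fun z => z * exp z - exp z + 1).
  assert (D0 : forall z, is_derive phi z (phi1 z)).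
  { intros z. unfold phi, phi1. auto_derive; auto. ring. }
  assert (D1 : forall z, is_derive phi1 z (z * exp z)).
  { intros z. unfold phi1. auto_derive; auto. ring. }
  assert (B1 : forall z, 0 <= z <= s -> Rabs (phi1 z) <= exp T0 * s * s).
  { intros z Hz.
    assert (H := mvt_bound' phi1 (fun w => w * exp w) 0 z (exp T0 * s)
       (fun x _ => D1 x)).
    replace (phi1 z) with (phi1 z - phi1 0) by (unfold phi1; rewrite exp_0; ring).
    eapply Rle_trans. apply H.
    { intros x Hx. rewrite Rmin_left in Hx by lra. rewrite Rmax_right in Hx by lra.
      assert (exp x <= exp T0) by (apply exp_le_mono; lra).
      assert (0 < exp x) by apply exp_pos.
      rewrite Rabs_pos_eq; nra. }
    rewrite Rabs_pos_eq by lra. assert (0 < exp T0) by apply exp_pos.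
    apply Rmult_le_compat_l; nra. }
  assert (H := mvt_bound' phi phi1 0 s (exp T0 * s * s) (fun x _ => D0 x)).
  change (s * exp s + s - 2 * exp s + 2) with (phi s).
  replace (phi s) with (phi s - phi 0) by (unfold phi; rewrite exp_0; ring).
  eapply Rle_trans. apply H.
  { intros x Hx. rewrite Rmin_left in Hx by lra. rewrite Rmax_right in Hx by lra. apply B1; lra. }
  rewrite Rabs_pos_eq by lra. right; ring.
Qed.

Lemma Fbound s t T0 : 0 < s <= T0 -> 0 < t <= T0 ->
  Rabs (F0 s t) <= (exp T0 * s^2 + (2*exp T0 + 1)*(s + Rabs (t-s)) * Rabs (t-s)) * (t-s)^2.
Proof.
  intros Hs Ht.
  set (g := sg s). assert (Hg := sg_bounds s ltac:(lra)). fold g in Hg.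
  set (d := t - s).
  set (f0 := fun z => g * (exp z + exp (-z) - 2) + s*(exp(-z) - 1) + z*(s - z)).
  set (f1 := fun z => g * (exp z - exp (-z)) - s * exp (-z) + s - 2*z).
  set (f2 := fun z => g * (exp z + exp (-z)) + s * exp (-z) - 2).
  set (f3 := fun z => g * (exp z - exp (-z)) - s * exp (-z)).
  assert (D0 : forall z, is_derive f0 z (f1 z)).
  { intros z. unfold f0, f1. auto_derive; auto. ring. }
  assert (D1 : forall z, is_derive f1 z (f2 z)).
  { intros z. unfold f1, f2. auto_derive; auto. ring. }
  assert (D2 : forall z, is_derive f2 z (f3 z)).
  { intros z. unfold f2, f3. auto_derive; auto. ring. }
  assert (He : 0 < exp s - 1) by (assert (H := expm1_ge s); lra).
  assert (Hes : 0 < exp s) by apply exp_pos.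
  assert (Em : exp (-s) = / exp s) by apply exp_Ropp.
  assert (Eg : g = s / (exp s - 1)) by reflexivity.
  assert (F0s : f0 s = 0).
  { unfold f0. rewrite Em, Eg. field. lra. }
  assert (F1s : f1 s = 0).
  { unfold f1. rewrite Em, Eg. field. lra. }
  assert (F2s : Rabs (f2 s) <= exp T0 * s^2).
  { unfold f2. rewrite Em, Eg.
    replace (s / (exp s - 1) * (exp s + / exp s) + s * / exp s - 2)
      with ((s * exp s + s - 2 * exp s + 2) / (exp s - 1)) by (field; lra).
    unfold Rdiv. rewrite Rabs_mult, Rabs_inv, (Rabs_pos_eq (exp s - 1)) by lra.
    assert (H := phi_bound s T0 Hs).
    assert (H2 := expm1_ge s ltac:(lra)).
    apply Rmult_le_reg_r with (exp s - 1). lra.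
    rewrite Rmult_assoc, Rinv_l, Rmult_1_r by lra.
    assert (0 < exp T0) by apply exp_pos.
    eapply Rle_trans. apply H. 
    replace (exp T0 * s^3) with (exp T0 * s^2 * s) by ring.
    apply Rmult_le_compat_l. nra. lra. }
  set (c3 := 2 * exp T0 + 1).
  assert (HT : 0 < exp T0) by apply exp_pos.
  assert (Bz : forall z, Rmin s t <= z <= Rmax s t -> 0 < z <= T0 /\ Rabs (z - s) <= Rabs d).
  { intros z Hz. unfold d. unfold Rmin, Rmax in Hz.
    destruct (Rle_dec s t); split; try lra;
    unfold Rabs; repeat destruct Rcase_abs; lra. }
  assert (B3 : forall z, Rmin s t <= z <= Rmax s t -> Rabs (f3 z) <= c3 * (s + Rabs d)).
  { intros z Hz. destruct (Bz z Hz) as [Hz1 Hz2].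
    assert (Hsh := sinh_bound z ltac:(lra)).
    assert (Ez : exp z <= exp T0) by (apply exp_le_mono; lra).
    assert (Emz : exp (-z) <= 1) by (rewrite <- exp_0; apply exp_le_mono; lra).
    assert (Emz' : 0 < exp (-z)) by apply exp_pos.
    assert (Hzl : z <= s + Rabs d) by (assert (Hq := Rle_abs (z - s)); lra).
    assert (A1 : 0 <= g * (exp z - exp (-z)) <= exp z - exp (-z)) by (split; nra).
    assert (A2 : 2 * z * exp z <= 2 * (s + Rabs d) * exp T0).
    { assert (0 < exp z) by apply exp_pos. apply Rmult_le_compat; nra. }
    assert (A3 : 0 <= s * exp (-z) <= s) by (split; nra).
    unfold f3, c3. assert (0 <= Rabs d) by apply Rabs_pos. apply Rabs_le. split; nra. }
  set (P := exp T0 * s^2 + c3 * (s + Rabs d) * Rabs d).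
  assert (HdP : 0 <= Rabs d) by apply Rabs_pos.
  assert (B2 : forall z, Rmin s t <= z <= Rmax s t -> Rabs (f2 z) <= P).
  { intros z Hz. destruct (Bz z Hz) as [Hz1 Hz2].
    assert (H := mvt_bound' f2 f3 s z (c3 * (s + Rabs d)) (fun x _ => D2 x)).
    assert (Hr : Rabs (f2 z - f2 s) <= c3 * (s + Rabs d) * Rabs (z - s)).
    { apply H. intros x Hx. apply B3. unfold Rmin, Rmax in *.
      destruct (Rle_dec s t), (Rle_dec s z); lra. }
    assert (c3 * (s + Rabs d) * Rabs (z - s) <= c3 * (s + Rabs d) * Rabs d).
    { apply Rmult_le_compat_l; auto. unfold c3; nra. }
    unfold P. 
    replace (f2 z) with ((f2 z - f2 s) + f2 s) by ring.
    eapply Rle_trans. apply Rabs_triang. lra. }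
  assert (B1 : forall z, Rmin s t <= z <= Rmax s t -> Rabs (f1 z) <= P * Rabs d).
  { intros z Hz. destruct (Bz z Hz) as [Hz1 Hz2].
    assert (H := mvt_bound' f1 f2 s z P (fun x _ => D1 x)).
    replace (f1 z) with (f1 z - f1 s) by (rewrite F1s; ring).
    eapply Rle_trans. apply H. intros x Hx. apply B2. unfold Rmin, Rmax in *.
      destruct (Rle_dec s t), (Rle_dec s z); lra.
    apply Rmult_le_compat_l; auto. unfold P, c3. 
    assert (0 <= exp T0 * s^2) by (apply Rmult_le_pos; nra). 
    assert (0 <= (2 * exp T0 + 1) * (s + Rabs d) * Rabs d) by (apply Rmult_le_pos; nra). lra. }
  assert (H := mvt_bound' f0 f1 s t (P * Rabs d) (fun x _ => D0 x) B1).
  replace (F0 s t) with (f0 t - f0 s) by (rewrite F0s; unfold f0, F0; fold g; ring).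
  eapply Rle_trans. apply H. fold d. 
  replace (d^2) with (Rabs d * Rabs d). unfold P, c3. right; ring.
  rewrite <- Rabs_mult. rewrite Rabs_pos_eq. ring. nra.
Qed.

Ltac etaD := repeat match goal with |- context [Derive (fun y => ?g y)] =>
  change (Derive (fun y => g y)) with (Derive g) end.

Lemma deriv_min0 w m l a b : a < m < b -> (forall x, a < x < b -> w m <= w x) ->
  is_derive w m l -> l = 0.
Proof.
  intros Hm Hmin Hd. apply is_derive_Reals in Hd.
  set (pr := exist _ l Hd : derivable_pt w m).
  assert (H := deriv_minimum w a b m pr ltac:(lra) ltac:(lra) (fun x h1 h2 => Hmin x (conj h1 h2))).
  exact H.
Qed.

Lemma neg_deriv_right p m l : is_derive p m l -> l < 0 -> p m = 0 ->
  exists del, 0 < del /\ forall z, m < z < m + del -> p z < 0.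
Proof.
  intros Hd Hl Hp. apply is_derive_Reals in Hd.
  destruct (Hd (- l / 2) ltac:(lra)) as [del Hdel].
  exists del. split. apply cond_pos. intros z Hz.
  assert (H := Hdel (z - m) ltac:(lra)).
  rewrite Rabs_pos_eq in H by lra. replace (m + (z - m)) with z in H by ring.
  rewrite Hp in H. specialize (H ltac:(lra)).
  assert (Hq : p z / (z - m) < l / 2) by (apply Rabs_def2 in H; lra).
  apply Rmult_lt_compat_r with (r := z - m) in Hq; [|lra].
  field_simplify in Hq; [|lra]. nra.
Qed.

Lemma maxp eps b c f u beta Fm sgn : 0 < eps -> 0 < beta ->
  (forall x, 0 <= x <= 1 -> beta < b x) -> (forall x, 0 <= x <= 1 -> 0 <= c x) ->
  (forall x, 0 <= x <= 1 -> Rabs (f x) <= Fm) -> is_solution eps b c f u ->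
  sgn * sgn = 1 -> forall x, 0 <= x <= 1 -> 0 <= (Fm+1)/beta*(2-x) - sgn * u x.
Proof.
  intros He Hb Hbb Hcc Hff [Hd [Hc2 [Hode [Hu0 Hu1]]]] Hsg.
  assert (HFm : 0 <= Fm) by (assert (H := Hff 0 ltac:(lra)); assert (H' := Rabs_pos (f 0)); lra).
  set (K0 := (Fm+1)/beta).
  assert (HK0 : 0 < K0) by (unfold K0; apply Rdiv_lt_0_compat; lra).
  set (w := fun x => K0*(2-x) - sgn * u x).
  set (p := fun z => -K0 - sgn * Derive u z).
  assert (Dw : forall x, 0 <= x <= 1 -> is_derive w x (p x)).
  { intros x Hx. unfold w, p. auto_derive. apply Hd; auto. etaD. ring. }
  assert (Cw : forall x, 0 <= x <= 1 -> continuity_pt w x).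
  { intros x Hx. apply continuity_pt_filterlim.
    apply (@ex_derive_continuous R_AbsRing R_NormedModule w x). exists (p x). apply Dw; auto. }
  destruct (continuity_ab_min w 0 1 ltac:(lra) Cw) as [m [Hmin Hm]].
  intros x Hx. change (0 <= w x).
  destruct (Rle_dec 0 (w m)) as [Hpos|Hneg]. { specialize (Hmin x Hx). lra. }
  exfalso. apply Rnot_le_lt in Hneg.
  assert (Hw0 : w 0 = 2 * K0) by (unfold w; cbv beta; rewrite Hu0; ring).
  assert (Hw1 : w 1 = K0) by (unfold w; cbv beta; rewrite Hu1; ring).
  assert (Hm0 : m <> 0) by (intros ->; lra).
  assert (Hm1 : m <> 1) by (intros ->; lra).
  assert (Hmo : 0 < m < 1) by lra.
  assert (Hp0 : p m = 0).
  { apply (deriv_min0 w m (p m) 0 1 Hmo). intros y Hy; apply Hmin; lra. apply Dw; lra. }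
  assert (Hode_m := Hode m Hmo).
  assert (Hsgf : sgn * f m <= Fm).
  { assert (H := Hff m ltac:(lra)). assert (Rabs (sgn * f m) = Rabs (f m)).
    { rewrite Rabs_mult. assert (Rabs sgn = 1). 
      { assert (Rabs sgn * Rabs sgn = 1) by (rewrite <- Rabs_mult, Hsg; apply Rabs_R1).
        assert (0 <= Rabs sgn) by apply Rabs_pos. nra. }
      rewrite H0; ring. }
    assert (H1 := Rle_abs (sgn * f m)). lra. }
  assert (Hbm := Hbb m ltac:(lra)). assert (Hcm := Hcc m ltac:(lra)).
  assert (Hwm : w m = K0*(2-m) - sgn * u m) by reflexivity.
  assert (Hpm : p m = -K0 - sgn * Derive u m) by reflexivity.
  assert (Hbk : beta * K0 = Fm + 1) by (unfold K0; field; lra).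
  assert (Key : 0 < sgn * Derive_n u 2 m).
  {
    assert (E1 : sgn * Derive u m = - K0) by lra.
    assert (E2 : eps * (sgn * Derive_n u 2 m) = b m * K0 + c m * (sgn * u m) - sgn * f m).
    { replace (b m * K0) with (- b m * (sgn * Derive u m)) by (rewrite E1; ring).
      assert (E3 : eps * Derive_n u 2 m = c m * u m - f m - b m * Derive u m) by lra.
      replace (eps * (sgn * Derive_n u 2 m)) with (sgn * (eps * Derive_n u 2 m)) by ring.
      rewrite E3. ring. }
    assert (c m * (sgn * u m) >= 0).
    { assert (0 <= sgn * u m) by nra. nra. }
    assert (b m * K0 > beta * K0) by nra.
    assert (0 < eps * (sgn * Derive_n u 2 m)) by lra. nra. }
  assert (Dp : is_derive p m (- sgn * Derive_n u 2 m)).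
  { unfold p. auto_derive. simpl. apply Hd; lra. simpl. etaD. rewrite Rmult_1_l. ring. }
  destruct (neg_deriv_right p m _ Dp ltac:(lra) Hp0) as [del [Hdel Hneg']].
  set (y := m + Rmin del (1 - m) / 2).
  assert (Hy : m < y < m + del /\ y < 1).
  { unfold y. unfold Rmin. destruct Rle_dec; lra. }
  destruct (MVT_cor2 w p m y ltac:(lra)) as [xi1 [Hxi Hxr]].
  { intros z Hz. apply is_derive_Reals. apply Dw. lra. }
  assert (p xi1 < 0) by (apply Hneg'; lra).
  assert (w m <= w y) by (apply Hmin; lra).
  nra.
Qed.

Lemma bounded01 g : (forall x, 0 <= x <= 1 -> continuous g x) ->
  exists M, 0 <= M /\ forall x, 0 <= x <= 1 -> Rabs (g x) <= M.
Proof.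
  intros Hc.
  assert (Cg : forall x, 0 <= x <= 1 -> continuity_pt g x)
    by (intros x Hx; apply continuity_pt_filterlim; apply Hc; auto).
  destruct (continuity_ab_maj g 0 1 ltac:(lra) Cg) as [M1 [H1 _]].
  destruct (continuity_ab_min g 0 1 ltac:(lra) Cg) as [m1 [H2 _]].
  exists (Rabs (g M1) + Rabs (g m1)). split.
  assert (H := Rabs_pos (g M1)); assert (H' := Rabs_pos (g m1)); lra.
  intros x Hx. specialize (H1 x Hx); specialize (H2 x Hx).
  apply Rabs_le. split.
  - assert (H := Rle_abs (- g m1)). rewrite Rabs_Ropp in H. assert (H' := Rabs_pos (g M1)). lra.
  - assert (H := Rle_abs (g M1)). assert (H' := Rabs_pos (g m1)). lra.
Qed.

Lemma u_bound eps b c f u beta Fm : 0 < eps -> 0 < beta ->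
  (forall x, 0 <= x <= 1 -> beta < b x) -> (forall x, 0 <= x <= 1 -> 0 <= c x) ->
  (forall x, 0 <= x <= 1 -> Rabs (f x) <= Fm) -> is_solution eps b c f u ->
  forall x, 0 <= x <= 1 -> Rabs (u x) <= 2 * ((Fm+1)/beta).
Proof.
  intros He Hb Hbb Hcc Hff Hs x Hx.
  assert (H1 := maxp eps b c f u beta Fm 1 He Hb Hbb Hcc Hff Hs ltac:(ring) x Hx).
  assert (H2 := maxp eps b c f u beta Fm (-1) He Hb Hbb Hcc Hff Hs ltac:(ring) x Hx).
  assert (HFm : 0 <= Fm) by (assert (H := Hff 0 ltac:(lra)); assert (H' := Rabs_pos (f 0)); lra).
  assert (0 < (Fm+1)/beta) by (apply Rdiv_lt_0_compat; lra).
  apply Rabs_le. split; nra.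
Qed.

Lemma du0_bound eps b c f u Bm L Cm Fm M :
  0 < eps < 1 -> C4_01 b -> is_solution eps b c f u ->
  (forall x, 0 <= x <= 1 -> Rabs (b x) <= Bm) ->
  (forall x, 0 <= x <= 1 -> Rabs (Derive b x) <= L) ->
  (forall x, 0 <= x <= 1 -> Rabs (c x) <= Cm) ->
  (forall x, 0 <= x <= 1 -> Rabs (f x) <= Fm) ->
  (forall x, 0 <= x <= 1 -> Rabs (u x) <= M) ->
  Rabs (eps * Derive u 0) <= M + Bm * M + (Cm * M + Fm + L * M).
Proof.
  intros He [Hb4 _] [Hd [Hc2 [Hode [Hu0 Hu1]]]] HB HL HC HF HM.
  assert (Hdb : forall x, 0 <= x <= 1 -> ex_derive b x).
  { intros x Hx. exact (Hb4 1%nat ltac:(lia) x Hx). }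
  destruct (MVT_gen u 0 eps (Derive u)) as [x1 [Hx1 Hx1e]].
  { intros x Hx. rewrite Rmin_left in Hx by lra. rewrite Rmax_right in Hx by lra.
    apply Derive_correct. apply Hd; lra. }
  { intros x Hx. rewrite Rmin_left in Hx by lra. rewrite Rmax_right in Hx by lra.
    apply continuity_pt_filterlim.
    apply (@ex_derive_continuous R_AbsRing R_NormedModule u x). apply Hd; lra. }
  rewrite Rmin_left in Hx1 by lra. rewrite Rmax_right in Hx1 by lra.
  set (Phi := fun x => eps * Derive u x + b x * u x).
  set (df := fun x => c x * u x - f x + Derive b x * u x).
  assert (DPhi : forall x, 0 <= x <= 1 -> is_derive Phi x
      (eps * Derive (Derive u) x + (Derive b x * u x + b x * Derive u x))).
  { intros x Hx. unfold Phi. auto_derive. repeat split; try apply Hd; auto. etaD. ring. }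
  assert (Hmv := mvt_bound Phi df 0 x1 (Cm * M + Fm + L * M)).
  rewrite Rmin_left in Hmv by lra. rewrite Rmax_right in Hmv by lra.
  assert (Hmv' : Rabs (Phi x1 - Phi 0) <= (Cm * M + Fm + L * M) * Rabs (x1 - 0)).
  { apply Hmv.
    - intros x Hx. replace (df x) with (eps * Derive (Derive u) x + (Derive b x * u x + b x * Derive u x)).
      apply DPhi; lra.
      assert (Ho := Hode x ltac:(lra)). change (Derive_n u 2 x) with (Derive (Derive u) x) in Ho. unfold df. lra.
    - intros x Hx. apply (@ex_derive_continuous R_AbsRing R_NormedModule Phi x).
      eexists. apply DPhi; lra.
    - intros x Hx. unfold df.
      assert (A1 := HC x ltac:(lra)). assert (A2 := HM x ltac:(lra)).
      assert (A3 := HF x ltac:(lra)). assert (A4 := HL x ltac:(lra)).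
      eapply Rle_trans. apply Rabs_triang. rewrite Rabs_mult.
      eapply Rle_trans. apply Rplus_le_compat_r. apply Rabs_triang. rewrite Rabs_mult, Rabs_Ropp.
      assert (0 <= Rabs (c x)) by apply Rabs_pos. assert (0 <= Rabs (u x)) by apply Rabs_pos.
      assert (0 <= Rabs (Derive b x)) by apply Rabs_pos.
      assert (Rabs (c x) * Rabs (u x) <= Cm * M) by (apply Rmult_le_compat; lra).
      assert (Rabs (Derive b x) * Rabs (u x) <= L * M) by (apply Rmult_le_compat; lra).
      lra. }
  assert (EP0 : Phi 0 = eps * Derive u 0) by (unfold Phi; rewrite Hu0; ring).
  assert (EP1 : eps * Derive u x1 = u eps) by (rewrite Hu0 in Hx1e; lra).
  replace (eps * Derive u 0) with (u eps + b x1 * u x1 - (Phi x1 - Phi 0))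
    by (rewrite EP0; unfold Phi; lra).
  assert (B1 := HM eps ltac:(lra)). assert (B2 := HM x1 ltac:(lra)). assert (B3 := HB x1 ltac:(lra)).
  assert (Rabs (b x1 * u x1) <= Bm * M).
  { rewrite Rabs_mult. apply Rmult_le_compat; try apply Rabs_pos; lra. }
  assert (Rabs (x1 - 0) <= 1) by (rewrite Rabs_pos_eq; lra).
  assert (0 <= Cm * M + Fm + L * M).
  { assert (H9 := Rabs_pos (Phi x1 - Phi 0)). 
    assert (0 <= Cm) by (assert (H7 := HC 0 ltac:(lra)); assert (H8 := Rabs_pos (c 0)); lra).
    assert (0 <= Fm) by (assert (H7 := HF 0 ltac:(lra)); assert (H8 := Rabs_pos (f 0)); lra).
    assert (0 <= L) by (assert (H7 := HL 0 ltac:(lra)); assert (H8 := Rabs_pos (Derive b 0)); lra).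
    assert (0 <= M) by (assert (H7 := HM 0 ltac:(lra)); assert (H8 := Rabs_pos (u 0)); lra).
    nra. }
  assert (Rabs (Phi x1 - Phi 0) <= Cm * M + Fm + L * M) by nra.
  eapply Rle_trans. apply Rabs_triang. rewrite Rabs_Ropp.
  eapply Rle_trans. apply Rplus_le_compat_r. apply Rabs_triang. lra.
Qed.

Lemma sigma_sg rho : 0 < rho -> Defs.sigma rho = sg (2 * rho).
Proof. intros H. unfold Defs.sigma. destruct (Req_EM_T rho 0). lra. reflexivity. Qed.

Lemma fine_identity A b0 bi eps h x0 : 0 < eps -> 0 < h -> 0 < bi ->
  let E := fun x => exp (- b0 * x / eps) in
  let g := fun x => - A * E x in
  let Dp := (g (x0 + h) - g x0) / h in
  let Dm := (g x0 - g (x0 - h)) / h in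
  let D2 := (Dp - Dm) / ((h + h) / 2) in
  - eps * Defs.sigma (bi * h / (2 * eps)) * D2 - bi * Dp
  + eps * (- A * (b0 / eps) ^ 2 * E x0) + bi * (A * (b0 / eps) * E x0)
  = A * E x0 * (eps / h ^ 2) * F0 (bi * h / eps) (b0 * h / eps).
Proof.
  intros He Hh Hbi E g Dp Dm D2.
  rewrite sigma_sg by (apply Rdiv_lt_0_compat; nra).
  replace (2 * (bi * h / (2 * eps))) with (bi * h / eps) by (field; lra).
  unfold D2, Dp, Dm, g, E, F0.
  assert (E1 : exp (- b0 * (x0 + h) / eps) = exp (- b0 * x0 / eps) * exp (- (b0 * h / eps))).
  { rewrite <- exp_plus. f_equal. field. lra. }
  assert (E2 : exp (- b0 * (x0 - h) / eps) = exp (- b0 * x0 / eps) * exp (b0 * h / eps)).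
  { rewrite <- exp_plus. f_equal. field. lra. }
  rewrite E1, E2. field. lra.
Qed.

Lemma fine_bound A b0 bi eps h x0 L Bm T0 beta :
  0 < eps <= 1 -> 0 < h -> 0 < bi <= Bm -> 0 < b0 <= Bm -> 0 <= x0 ->
  Rabs (b0 - bi) <= L * x0 -> 0 <= L -> bi * h / eps <= T0 -> b0 * h / eps <= T0 ->
  0 < beta < b0 ->
  Rabs (A * exp (- b0 * x0 / eps) * (eps / h ^ 2) * F0 (bi * h / eps) (b0 * h / eps))
  <= Rabs A * (h / eps) ^ 2 *
     ((exp T0 * Bm^2 * L^2 + (2 * exp T0 + 1) * Bm * L^3 + (2 * exp T0 + 1) * L^4)
      * (1 + 256 / (b0 - beta) ^ 4)) * exp (- beta * x0 / eps).
Proof.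
  intros He Hh Hbi Hb0 Hx0 Hlip HL HT1 HT2 Hbe.
  set (r := h / eps). set (y := x0 / eps). set (s := bi * h / eps). set (t := b0 * h / eps).
  set (c3 := 2 * exp T0 + 1). set (dl := b0 - beta).
  assert (Hr : 0 < r) by (unfold r; apply Rdiv_lt_0_compat; lra).
  assert (Hy : 0 <= y) by (unfold y; apply Rdiv_le_0_compat; lra).
  assert (Hs : s = bi * r) by (unfold s, r; field; lra).
  assert (Ht : t = b0 * r) by (unfold t, r; field; lra).
  assert (Hx0y : x0 = y * eps) by (unfold y; field; lra).
  assert (HT : 0 < exp T0) by apply exp_pos.
  assert (Hc3 : 1 <= c3) by (unfold c3; lra).
  assert (Hsp : 0 < s <= T0) by (split; [rewrite Hs; apply Rmult_lt_0_compat; lra | unfold s; lra]).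
  assert (Htp : 0 < t <= T0) by (split; [rewrite Ht; apply Rmult_lt_0_compat; lra | unfold t; lra]).
  assert (Hdle : dl = b0 - beta) by reflexivity.
  assert (Hre : r = h / eps) by reflexivity.
  assert (Hc3e : c3 = 2 * exp T0 + 1) by reflexivity.
  clearbody r y s t c3 dl.
  assert (FB := Fbound s t T0 Hsp Htp). rewrite <- Hc3e in FB.
  set (d := t - s) in *.
  assert (Hdd : d = (b0 - bi) * r) by (unfold d; rewrite Hs, Ht; ring).
  assert (Had : Rabs d <= L * y * r).
  { rewrite Hdd, Rabs_mult, (Rabs_pos_eq r) by lra.
    assert (L * x0 <= L * y). { rewrite Hx0y. assert (0 <= L * y) by (apply Rmult_le_pos; lra). nra. }
    apply Rmult_le_compat_r; lra. }
  assert (Had' : Rabs d <= L * y * eps * r).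
  { rewrite Hdd, Rabs_mult, (Rabs_pos_eq r) by lra. replace (L * y * eps) with (L * x0) by (rewrite Hx0y; ring).
    apply Rmult_le_compat_r; lra. }
  assert (Had2 : d ^ 2 <= (L * y * eps * r) ^ 2).
  { rewrite <- pow2_abs. apply pow_incr. split; [apply Rabs_pos| exact Had']. }
  assert (Hd0 : 0 <= Rabs d) by apply Rabs_pos.
  assert (Her : 0 < eps * r ^ 2) by (apply Rmult_lt_0_compat; [lra| apply pow_lt; lra]).
  assert (Hr2 : 0 < r ^ 2) by (apply pow_lt; lra).
  assert (Heh : eps / h ^ 2 = / (eps * r ^ 2)) by (rewrite Hre; field; lra).
  assert (Q1b : exp T0 * s ^ 2 + c3 * (s + Rabs d) * Rabs d
     <= r ^ 2 * (exp T0 * Bm ^ 2 + c3 * (Bm + L * y) * (L * y))).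
  { assert (A0 : s <= Bm * r) by (rewrite Hs; apply Rmult_le_compat_r; lra).
    assert (A1 : s ^ 2 <= (Bm * r) ^ 2) by (apply pow_incr; lra).
    assert (A2 : s + Rabs d <= (Bm + L * y) * r) by (rewrite Rmult_plus_distr_r; lra).
    assert (A3 : (s + Rabs d) * Rabs d <= (Bm + L * y) * r * (L * y * r)).
    { apply Rmult_le_compat; try lra. }
    assert (A4 : exp T0 * s ^ 2 <= exp T0 * (Bm * r) ^ 2) by (apply Rmult_le_compat_l; lra).
    assert (A5 : c3 * ((s + Rabs d) * Rabs d) <= c3 * ((Bm + L * y) * r * (L * y * r)))
      by (apply Rmult_le_compat_l; lra).
    replace (r ^ 2 * (exp T0 * Bm ^ 2 + c3 * (Bm + L * y) * (L * y)))
      with (exp T0 * (Bm * r) ^ 2 + c3 * ((Bm + L * y) * r * (L * y * r))) by ring.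
    replace (c3 * (s + Rabs d) * Rabs d) with (c3 * ((s + Rabs d) * Rabs d)) by ring.
    lra. }
  assert (Q3b : (eps / h ^ 2) * d ^ 2 <= L ^ 2 * y ^ 2).
  { rewrite Heh. apply Rmult_le_reg_l with (eps * r ^ 2). lra.
    rewrite <- Rmult_assoc, Rinv_r, Rmult_1_l by lra.
    eapply Rle_trans. apply Had2. 
    assert (0 <= L^2 * y^2 * r^2) by (apply Rmult_le_pos; [apply Rmult_le_pos|]; apply pow_le; lra).
    replace ((L * y * eps * r) ^ 2) with (eps * (L^2 * y^2 * r^2) * eps) by ring.
    replace (eps * r ^ 2 * (L ^ 2 * y ^ 2)) with (eps * (L^2 * y^2 * r^2) * 1) by ring.
    apply Rmult_le_compat_l; nra. }
  set (Pc := exp T0 * Bm^2 * L^2 + c3 * Bm * L^3 + c3 * L^4).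
  assert (HPc : (exp T0 * Bm ^ 2 + c3 * (Bm + L * y) * (L * y)) * (L^2 * y^2) <= Pc * (1 + y ^ 4)).
  { assert (y^2 <= 1 + y^4) by nra. assert (y^3 <= 1 + y^4) by nra.
    assert (0 <= exp T0 * Bm^2 * L^2) by (apply Rmult_le_pos; nra).
    assert (0 <= c3 * Bm * L^3) by (apply Rmult_le_pos; [nra| apply pow_le; lra]).
    assert (0 <= c3 * L^4) by (apply Rmult_le_pos; [nra| apply pow_le; lra]).
    unfold Pc.
    replace ((exp T0 * Bm ^ 2 + c3 * (Bm + L * y) * (L * y)) * (L ^ 2 * y ^ 2))
      with (exp T0 * Bm^2 * L^2 * y^2 + c3 * Bm * L^3 * y^3 + c3 * L^4 * y^4) by ring.
    nra. }
  assert (HPc0 : 0 <= Pc).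
  { unfold Pc. assert (0 <= exp T0 * Bm^2 * L^2) by (apply Rmult_le_pos; nra).
    assert (0 <= c3 * Bm * L^3) by (apply Rmult_le_pos; [nra| apply pow_le; lra]).
    assert (0 <= c3 * L^4) by (apply Rmult_le_pos; [nra| apply pow_le; lra]). lra. }
  assert (Hdl : 0 < dl) by (rewrite Hdle; lra).
  assert (EE : exp (- b0 * x0 / eps) = exp (- (dl * y)) * exp (- beta * x0 / eps)).
  { rewrite <- exp_plus. f_equal. rewrite Hx0y, Hdle. field. lra. }
  assert (Hexp : (1 + y^4) * exp (- (dl * y)) <= 1 + 256 / dl ^ 4).
  { assert (H4 := y4_exp dl y Hdl Hy). 
    assert (exp (- (dl * y)) <= 1) by (rewrite <- exp_0; apply exp_le_mono; nra). lra. }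
  assert (Heb : 0 < exp (- beta * x0 / eps)) by apply exp_pos.
  assert (Hedl : 0 < exp (- (dl * y))) by apply exp_pos.
  rewrite !Rabs_mult. rewrite (Rabs_pos_eq (exp _)) by (left; apply exp_pos).
  rewrite (Rabs_pos_eq (eps / h^2)) by (rewrite Heh; left; apply Rinv_0_lt_compat; nra).
  assert (HA : 0 <= Rabs A) by apply Rabs_pos.
  assert (Key : eps / h ^ 2 * Rabs (F0 s t) <= r ^ 2 * (Pc * (1 + y ^ 4))).
  { assert (0 <= eps / h ^ 2) by (rewrite Heh; left; apply Rinv_0_lt_compat; nra).
    eapply Rle_trans. apply Rmult_le_compat_l. auto. apply FB.
    assert (0 <= exp T0 * s ^ 2 + c3 * (s + Rabs d) * Rabs d).
    { assert (0 <= exp T0 * s^2) by (apply Rmult_le_pos; [lra| apply pow_le; lra]).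
      assert (0 <= c3 * (s + Rabs d) * Rabs d) by (apply Rmult_le_pos; [apply Rmult_le_pos|]; lra). lra. }
    replace (eps / h ^ 2 * ((exp T0 * s ^ 2 + c3 * (s + Rabs d) * Rabs d) * d ^ 2))
      with ((exp T0 * s ^ 2 + c3 * (s + Rabs d) * Rabs d) * (eps / h ^ 2 * d ^ 2)) by ring.
    eapply Rle_trans. apply Rmult_le_compat_l. auto. apply Q3b.
    eapply Rle_trans. apply Rmult_le_compat_r. nra. apply Q1b.
    rewrite Rmult_assoc. apply Rmult_le_compat_l. nra. auto. }
  rewrite EE.
  replace (Rabs A * (exp (- (dl * y)) * exp (- beta * x0 / eps)) * (eps / h ^ 2) * Rabs (F0 s t))
    with (Rabs A * exp (- beta * x0 / eps) * (exp (- (dl * y)) * (eps / h ^ 2 * Rabs (F0 s t)))) by ring.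
  replace (Rabs A * r ^ 2 * (Pc * (1 + 256 / dl ^ 4)) * exp (- beta * x0 / eps))
    with (Rabs A * exp (- beta * x0 / eps) * (r ^ 2 * Pc * (1 + 256 / dl ^ 4))) by ring.
  apply Rmult_le_compat_l. nra.
  eapply Rle_trans. apply Rmult_le_compat_l. lra. apply Key.
  replace (exp (- (dl * y)) * (r ^ 2 * (Pc * (1 + y ^ 4))))
    with (r ^ 2 * Pc * ((1 + y ^ 4) * exp (- (dl * y)))) by ring.
  apply Rmult_le_compat_l. nra. auto.
Qed.

Lemma one_minus_exp y : 0 <= y -> 0 <= 1 - exp (- y) <= y /\ 1 - exp (-y) <= 1.
Proof.
  intros Hy. assert (H := exp_ineq1_le (- y)). assert (H2 := exp_pos (- y)).
  assert (exp (- y) <= 1) by (rewrite <- exp_0; apply exp_le_mono; lra). lra.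
Qed.

Lemma coarse_bound A b0 bi eps xm x0 xp Bm L :
  0 < eps -> 0 < b0 -> 0 < bi <= Bm -> xm < x0 < xp -> Rabs (bi - b0) <= L * x0 -> 0 <= L ->
  let E := fun x => exp (- b0 * x / eps) in
  let g := fun x => - A * E x in
  let hi := x0 - xm in let hi1 := xp - x0 in
  let Dp := (g xp - g x0) / hi1 in
  let Dm := (g x0 - g xm) / hi in
  let D2 := (Dp - Dm) / ((hi + hi1) / 2) in
  Rabs (- eps * Defs.sigma (bi * hi1 / (2 * eps)) * D2 - bi * Dp
     + eps * (- A * (b0 / eps) ^ 2 * E x0) + bi * (A * (b0 / eps) * E x0))
  <= Rabs A * ((4 * b0 + Bm) * E xm / hi1 + b0 * L * (x0 / eps) * E x0).
Proof.
  intros He Hb0 Hbi Hx Hlip HL E g hi hi1 Dp Dm D2.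
  assert (Hhi : 0 < hi) by (unfold hi; lra). assert (Hhi1 : 0 < hi1) by (unfold hi1; lra).
  assert (Hrho : 0 < bi * hi1 / (2 * eps)) by (apply Rdiv_lt_0_compat; nra).
  assert (Hsg := sg_bounds _ (Rmult_lt_0_compat 2 _ ltac:(lra) Hrho)).
  rewrite <- sigma_sg in Hsg by auto.
  set (sig := Defs.sigma (bi * hi1 / (2 * eps))) in *.
  set (ya := b0 * hi1 / eps). set (yb := b0 * hi / eps).
  assert (Hya : 0 <= ya) by (unfold ya; apply Rdiv_le_0_compat; nra).
  assert (Hyb : 0 <= yb) by (unfold yb; apply Rdiv_le_0_compat; nra).
  destruct (one_minus_exp ya Hya) as [Ha1 Ha2]. destruct (one_minus_exp yb Hyb) as [Hb1 Hb2].
  set (e0 := E x0). set (em := E xm).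
  assert (He0 : 0 < e0) by apply exp_pos. assert (Hem : 0 < em) by apply exp_pos.
  assert (Exp : E xp = e0 * exp (- ya)).
  { unfold e0, ya, E. cbv beta. rewrite <- exp_plus. f_equal. unfold hi1. field. lra. }
  assert (Ex0 : e0 = em * exp (- yb)).
  { unfold e0, em, yb, E. cbv beta. rewrite <- exp_plus. f_equal. unfold hi. field. lra. }
  assert (Hle : e0 <= em) by (assert (H := exp_pos (-yb)); nra).
  assert (EDp : Dp = A * e0 * (1 - exp (- ya)) / hi1).
  { unfold Dp, g. rewrite Exp. fold e0. field. lra. }
  assert (EDm : Dm = A * em * (1 - exp (- yb)) / hi).
  { unfold Dm, g. fold e0 em. rewrite Ex0. field. lra. }
  assert (HAa : 0 <= Rabs A) by apply Rabs_pos.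
  assert (BDp1 : Rabs Dp <= Rabs A * em / hi1).
  { rewrite EDp. unfold Rdiv. rewrite !Rabs_mult, Rabs_inv, (Rabs_pos_eq hi1), (Rabs_pos_eq e0), (Rabs_pos_eq (1 - _)) by lra.
    apply Rmult_le_compat_r. left; apply Rinv_0_lt_compat; lra.
    assert (e0 * (1 - exp (-ya)) <= em) by nra. rewrite Rmult_assoc. apply Rmult_le_compat_l; lra. }
  assert (BDp2 : Rabs Dp <= Rabs A * em * (b0 / eps)).
  { rewrite EDp. unfold Rdiv. rewrite !Rabs_mult, Rabs_inv, (Rabs_pos_eq hi1), (Rabs_pos_eq e0), (Rabs_pos_eq (1 - _)) by lra.
    assert (Hq : (1 - exp (- ya)) * / hi1 <= b0 * / eps).
    { apply Rmult_le_reg_r with hi1. lra. rewrite Rmult_assoc, Rinv_l, Rmult_1_r by lra.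
      replace (b0 * / eps * hi1) with ya by (unfold ya; field; lra). lra. }
    assert (0 <= (1 - exp (- ya)) * / hi1) by (apply Rmult_le_pos; [lra| left; apply Rinv_0_lt_compat; lra]).
    replace (Rabs A * e0 * (1 - exp (- ya)) * / hi1) with (Rabs A * e0 * ((1 - exp (- ya)) * / hi1)) by ring.
    replace (Rabs A * em * (b0 / eps)) with (Rabs A * em * (b0 * / eps)) by (unfold Rdiv; ring).
    apply Rmult_le_compat; try lra. apply Rmult_le_pos; lra. apply Rmult_le_compat_l; lra. }
  assert (BDm : Rabs Dm <= Rabs A * em * (b0 / eps)).
  { rewrite EDm. unfold Rdiv. rewrite !Rabs_mult, Rabs_inv, (Rabs_pos_eq hi), (Rabs_pos_eq em), (Rabs_pos_eq (1 - _)) by lra.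
    assert (Hq : (1 - exp (- yb)) * / hi <= b0 * / eps).
    { apply Rmult_le_reg_r with hi. lra. rewrite Rmult_assoc, Rinv_l, Rmult_1_r by lra.
      replace (b0 * / eps * hi) with yb by (unfold yb; field; lra). lra. }
    replace (Rabs A * em * (1 - exp (- yb)) * / hi) with (Rabs A * em * ((1 - exp (- yb)) * / hi)) by ring.
    apply Rmult_le_compat_l. apply Rmult_le_pos; lra. lra. }
  assert (T1 : Rabs (- eps * sig * D2) <= 4 * b0 * Rabs A * em / hi1).
  { unfold D2. rewrite Rabs_mult, Rabs_mult, Rabs_Ropp, (Rabs_pos_eq eps), (Rabs_pos_eq sig) by lra.
    unfold Rdiv at 1. rewrite Rabs_mult, Rabs_inv, (Rabs_pos_eq ((hi + hi1)/2)) by lra.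
    assert (Htr : Rabs (Dp - Dm) <= 2 * Rabs A * em * (b0 / eps)).
    { unfold Rminus. eapply Rle_trans. apply Rabs_triang. rewrite Rabs_Ropp. lra. }
    assert (Hinv : / ((hi + hi1) / 2) <= 2 / hi1).
    { apply Rmult_le_reg_l with ((hi + hi1)/2). lra. rewrite Rinv_r by lra.
      apply Rmult_le_reg_l with hi1. lra. field_simplify; lra. }
    assert (0 <= Rabs (Dp - Dm)) by apply Rabs_pos.
    assert (0 < / ((hi + hi1) / 2)) by (apply Rinv_0_lt_compat; lra).
    assert (eps * sig <= eps) by nra.
    assert (P1 : Rabs (Dp - Dm) * / ((hi + hi1) / 2) <= (2 * Rabs A * em * (b0 / eps)) * (2 / hi1)).
    { apply Rmult_le_compat; lra. }
    assert (P2 : eps * sig <= eps * 1) by (apply Rmult_le_compat_l; lra).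
    apply Rle_trans with ((eps * 1) * ((2 * Rabs A * em * (b0 / eps)) * (2 / hi1))).
    apply Rmult_le_compat; try lra. apply Rmult_le_pos; lra. apply Rmult_le_pos; lra.
    right. field. lra. }
  assert (T2 : Rabs (bi * Dp) <= Bm * (Rabs A * em / hi1)).
  { rewrite Rabs_mult, (Rabs_pos_eq bi) by lra. apply Rmult_le_compat; try lra. apply Rabs_pos. }
  assert (T3 : Rabs (eps * (- A * (b0 / eps) ^ 2 * E x0) + bi * (A * (b0 / eps) * E x0))
               <= Rabs A * (b0 * L * (x0 / eps) * e0)).
  { fold e0. replace (eps * (- A * (b0 / eps) ^ 2 * e0) + bi * (A * (b0 / eps) * e0))
       with (A * (e0 * (b0 / eps) * (bi - b0))) by (field; lra).
    rewrite Rabs_mult. apply Rmult_le_compat_l. auto.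
    rewrite Rabs_mult, Rabs_pos_eq.
    replace (b0 * L * (x0 / eps) * e0) with (e0 * (b0 / eps) * (L * x0)) by (field; lra).
    apply Rmult_le_compat_l. apply Rmult_le_pos. lra. apply Rdiv_le_0_compat; lra. auto.
    apply Rmult_le_pos. lra. apply Rdiv_le_0_compat; lra. }
  fold e0 em. fold e0 in T3.
  set (T3e := eps * (- A * (b0 / eps) ^ 2 * e0) + bi * (A * (b0 / eps) * e0)) in *.
  replace (- eps * sig * D2 - bi * Dp + eps * (- A * (b0 / eps) ^ 2 * e0) + bi * (A * (b0 / eps) * e0))
    with ((- eps * sig * D2) + (- (bi * Dp)) + T3e) by (unfold T3e; ring).
  eapply Rle_trans. apply Rabs_triang. eapply Rle_trans. apply Rplus_le_compat_r. apply Rabs_triang.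
  rewrite Rabs_Ropp.
  replace (Rabs A * ((4 * b0 + Bm) * em / hi1 + b0 * L * (x0 / eps) * e0))
    with (4 * b0 * Rabs A * em / hi1 + Bm * (Rabs A * em / hi1) + Rabs A * (b0 * L * (x0 / eps) * e0)) by (field; lra).
  lra.
Qed.

Lemma mesh_le beta a eps lam N J i : (i <= J)%nat ->
  mesh beta a eps lam N J i = INR i * (xi beta a eps lam / INR J).
Proof. intros H. unfold mesh. cbv zeta. rewrite (proj2 (Nat.leb_le i J) H). reflexivity. Qed.

Lemma mesh_gt beta a eps lam N J i : (J < i)%nat ->
  mesh beta a eps lam N J i = xi beta a eps lam + (INR i - INR J) * ((1 - xi beta a eps lam) / (INR N - INR J)).
Proof.
  intros H. unfold mesh. cbv zeta.
  destruct (Nat.leb_spec i J). lia. reflexivity.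
Qed.

Lemma mesh_ge beta a eps lam N J i : (0 < J)%nat -> (J <= i)%nat ->
  mesh beta a eps lam N J i = xi beta a eps lam + (INR i - INR J) * ((1 - xi beta a eps lam) / (INR N - INR J)).
Proof.
  intros H0 H. destruct (Nat.eq_dec i J) as [->|Hn].
  - rewrite mesh_le by lia. assert (0 < INR J) by (apply lt_0_INR; lia). replace (INR J - INR J) with 0 by ring. rewrite Rmult_0_l, Rplus_0_r. field. lra.
  - apply mesh_gt. lia.
Qed.

Lemma vfun_eq eps b u x : vfun eps b u x = - (eps * Derive u 0 / b 0) * exp (- b 0 * x / eps).
Proof. reflexivity. Qed.

Lemma vfun_D eps b u : 0 < eps -> forall x,
  Derive (vfun eps b u) x = (eps * Derive u 0 / b 0) * (b 0 / eps) * exp (- b 0 * x / eps).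
Proof.
  intros He x. apply is_derive_unique. unfold vfun. auto_derive. auto. unfold Rdiv. ring.
Qed.

Lemma vfun_D2 eps b u : 0 < eps -> forall x,
  Derive_n (vfun eps b u) 2 x = - (eps * Derive u 0 / b 0) * (b 0 / eps) ^ 2 * exp (- b 0 * x / eps).
Proof.
  intros He x. change (Derive_n (vfun eps b u) 2 x) with (Derive (Derive (vfun eps b u)) x).
  rewrite (Derive_ext _ _ x (vfun_D eps b u He)).
  apply is_derive_unique. auto_derive. auto. unfold Rdiv. ring.
Qed.

Theorem lemma1 (b c f : R -> R) (beta a Q : R) :
  C4_01 b -> C4_01 c -> C4_01 f ->
  0 < beta ->
  (forall x, 0 <= x <= 1 -> beta < b x) ->
  (forall x, 0 <= x <= 1 -> 0 <= c x) ->
  0 < Q < 1 ->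
  (exists p q : nat, (0 < q)%nat /\ Q = INR p / INR q) ->
  a >= beta / (b 0 - beta) ->
  exists C : R,
    forall (eps : R) (N J : nat) (u : R -> R),
      0 < eps < 1 ->
      (0 < N)%nat ->
      INR J = Q * INR N ->
      xi beta a eps (INR N) <= Q ->
      is_solution eps b c f u ->
      forall i : nat,
        ((1 <= i <= J - 1)%nat ->
           Rabs (tau beta a eps (INR N) N J b (vfun eps b u) i)
           <= C * (/ (INR N ^ 2)) * (ln (INR N)) ^ 2
                * exp (- beta * mesh beta a eps (INR N) N J i / eps)) /\
        ((J <= i <= N - 1)%nat ->
           Rabs (tau beta a eps (INR N) N J b (vfun eps b u) i)
           <= C * Rpower (INR N) (- a)).
Proof.
  intros Hb4 Hc4 Hf4 Hbeta Hbb Hcc HQ _ Ha.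
  assert (Cb : forall x, 0 <= x <= 1 -> continuous b x).
  { intros x Hx. apply (@ex_derive_continuous R_AbsRing R_NormedModule b x).
    exact (proj1 Hb4 1%nat ltac:(lia) x Hx). }
  assert (Cdb : forall x, 0 <= x <= 1 -> continuous (Derive b) x).
  { intros x Hx. apply (@ex_derive_continuous R_AbsRing R_NormedModule (Derive b) x).
    exact (proj1 Hb4 2%nat ltac:(lia) x Hx). }
  assert (Cc : forall x, 0 <= x <= 1 -> continuous c x).
  { intros x Hx. apply (@ex_derive_continuous R_AbsRing R_NormedModule c x).
    exact (proj1 Hc4 1%nat ltac:(lia) x Hx). }
  assert (Cf : forall x, 0 <= x <= 1 -> continuous f x).
  { intros x Hx. apply (@ex_derive_continuous R_AbsRing R_NormedModule f x).
    exact (proj1 Hf4 1%nat ltac:(lia) x Hx). }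
  destruct (bounded01 b Cb) as [Bm [HBm0 HBm]].
  destruct (bounded01 (Derive b) Cdb) as [L [HL0 HL]].
  destruct (bounded01 c Cc) as [Cm [HCm0 HCm]].
  destruct (bounded01 f Cf) as [Fm [HFm0 HFm]].
  set (b0 := b 0) in *.
  assert (Hb0 : beta < b0) by (apply Hbb; lra).
  assert (Hb0B : b0 <= Bm) by (assert (H := HBm 0 ltac:(lra)); fold b0 in H; assert (H' := Rle_abs b0); lra).
  assert (HbB : forall x, 0 <= x <= 1 -> 0 < b x <= Bm).
  { intros x Hx. assert (H := HBm x Hx). assert (H' := Rle_abs (b x)). assert (H'' := Hbb x Hx). lra. }
  assert (Hlip : forall x, 0 <= x <= 1 -> Rabs (b x - b0) <= L * x).
  { intros x Hx. assert (H := mvt_bound' b (Derive b) 0 x L).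
    rewrite Rmin_left, Rmax_right in H by lra. rewrite Rabs_pos_eq with (x := x - 0) in H by lra.
    replace x with (x - 0) at 2 by ring. apply H.
    - intros z Hz. apply Derive_correct. exact (proj1 Hb4 1%nat ltac:(lia) z ltac:(lra)).
    - intros z Hz. apply HL; lra. }
  set (M := 2 * ((Fm + 1) / beta)).
  set (KA := (M + Bm * M + (Cm * M + Fm + L * M)) / b0).
  set (dl := b0 - beta).
  set (r0 := a / (beta * Q)).
  set (T0 := Bm * r0).
  set (c3 := 2 * exp T0 + 1).
  set (Pc := exp T0 * Bm^2 * L^2 + c3 * Bm * L^3 + c3 * L^4).
  set (Cfi := KA * r0 ^ 2 * (Pc * (1 + 256 / dl ^ 4))).
  set (Cco := KA * (4 * b0 + Bm) * exp (b0 * r0) + KA * (b0 * L / dl)).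
  assert (Hdl : 0 < dl) by (unfold dl; lra).
  assert (Ha' : beta <= a * dl).
  { unfold dl. apply Rge_le in Ha. apply Rmult_le_reg_r with (/ (b0 - beta)).
    apply Rinv_0_lt_compat; lra. rewrite Rmult_assoc, Rinv_r by lra. lra. }
  assert (Hapos : 0 < a) by nra.
  assert (HM : 0 < M) by (unfold M; apply Rmult_lt_0_compat; [lra| apply Rdiv_lt_0_compat; lra]).
  assert (HKA : 0 <= KA).
  { unfold KA. apply Rdiv_le_0_compat; [|lra].
    assert (0 <= Bm * M) by nra. assert (0 <= Cm * M) by nra. assert (0 <= L * M) by nra. lra. }
  assert (Hr0 : 0 < r0) by (unfold r0; apply Rdiv_lt_0_compat; nra).
  assert (HT0 : 0 <= T0) by (unfold T0; nra).
  assert (HeT : 0 < exp T0) by apply exp_pos.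
  assert (Hc3 : 0 < c3) by (unfold c3; lra).
  assert (HPc : 0 <= Pc).
  { unfold Pc. assert (0 <= exp T0 * Bm^2 * L^2) by (apply Rmult_le_pos; [apply Rmult_le_pos|]; try apply pow_le; lra).
    assert (0 <= c3 * Bm * L^3) by (apply Rmult_le_pos; [nra| apply pow_le; lra]).
    assert (0 <= c3 * L^4) by (apply Rmult_le_pos; [nra| apply pow_le; lra]). lra. }
  assert (HCfi : 0 <= Cfi).
  { unfold Cfi. apply Rmult_le_pos. apply Rmult_le_pos. lra. apply pow_le; lra.
    apply Rmult_le_pos. lra. assert (0 < dl^4) by (apply pow_lt; lra).
    assert (0 <= 256 / dl^4) by (apply Rdiv_le_0_compat; lra). lra. }
  assert (HCco : 0 <= Cco).
  { unfold Cco. assert (0 < exp (b0 * r0)) by apply exp_pos.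
    assert (0 <= KA * (4 * b0 + Bm)) by (apply Rmult_le_pos; lra).
    assert (0 <= b0 * L / dl) by (apply Rdiv_le_0_compat; nra).
    assert (0 <= KA * (b0 * L / dl)) by (apply Rmult_le_pos; lra). nra. }
  exists (Cfi + Cco).
  intros eps N J u He HN HJ Hxi Hsol i.
  set (A := eps * Derive u 0 / b0).
  assert (HA : Rabs A <= KA).
  { assert (Hub := u_bound eps b c f u beta Fm ltac:(lra) Hbeta Hbb Hcc HFm Hsol).
    assert (Hd := du0_bound eps b c f u Bm L Cm Fm M He Hb4 Hsol HBm HL HCm HFm Hub).
    unfold A, KA. unfold Rdiv. rewrite Rabs_mult, Rabs_inv, (Rabs_pos_eq b0) by lra.
    apply Rmult_le_compat_r. left; apply Rinv_0_lt_compat; lra. exact Hd. }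
  set (Nr := INR N) in *.
  assert (HJp : 0 < INR J) by (rewrite HJ; apply Rmult_lt_0_compat; [lra| apply lt_0_INR; lia]).
  assert (HJn : (0 < J)%nat) by (apply INR_lt; simpl; lra).
  assert (HJN : INR J < Nr) by (rewrite HJ; assert (0 < Nr) by (apply lt_0_INR; lia); nra).
  assert (HJNn : (J < N)%nat) by (apply INR_lt; exact HJN).
  assert (HN2 : 2 <= Nr) by (unfold Nr; replace 2 with (INR 2) by (simpl; lra); apply le_INR; lia).
  assert (Hln : 0 < ln Nr) by (rewrite <- ln_1; apply ln_increasing; lra).
  assert (HlnN : ln Nr <= Nr) by (apply ln_le_x; lra).
  set (xi0 := xi beta a eps Nr) in *.
  assert (Hxi0 : xi0 = a * eps / beta * ln Nr) by reflexivity.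
  assert (Hxi0p : 0 < xi0) by (rewrite Hxi0; apply Rmult_lt_0_compat; [apply Rdiv_lt_0_compat; nra|lra]).
  set (h := xi0 / INR J).
  assert (Hhp : 0 < h) by (unfold h; apply Rdiv_lt_0_compat; lra).
  assert (Hhe : h / eps = r0 * ln Nr / Nr).
  { unfold h, r0. rewrite Hxi0, HJ. field. repeat split; lra. }
  assert (Hher : h / eps <= r0).
  { rewrite Hhe. apply Rmult_le_reg_r with Nr. lra. field_simplify; try lra. nra. }
  assert (Hv : forall x, vfun eps b u x = - A * exp (- b0 * x / eps)) by (intros; reflexivity).
  assert (HD1 : forall x, Derive (vfun eps b u) x = A * (b0 / eps) * exp (- b0 * x / eps))
    by (apply vfun_D; lra).
  assert (HD2 : forall x, Derive_n (vfun eps b u) 2 x = - A * (b0 / eps) ^ 2 * exp (- b0 * x / eps))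
    by (apply vfun_D2; lra).
  split.
  - intros [Hi1 Hi2].
    assert (Hm0 : mesh beta a eps Nr N J i = INR i * h) by (apply mesh_le; lia).
    assert (Hmm : mesh beta a eps Nr N J (i - 1) = INR i * h - h).
    { rewrite mesh_le by lia. rewrite minus_INR by lia. fold xi0 h. simpl. ring. }
    assert (Hmp : mesh beta a eps Nr N J (S i) = INR i * h + h).
    { rewrite mesh_le by lia. rewrite S_INR. fold xi0 h. ring. }
    set (x0 := INR i * h) in *.
    assert (Hx0 : 0 <= x0 <= 1).
    { unfold x0. split. apply Rmult_le_pos. apply pos_INR. lra.
      assert (INR i <= INR J) by (apply le_INR; lia).
      assert (INR i * h <= INR J * h) by (apply Rmult_le_compat_r; lra).
      assert (INR J * h = xi0) by (unfold h; field; lra). lra. }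
    unfold tau. cbv zeta. rewrite Hm0, Hmm, Hmp, !HD1, !HD2, !Hv.
    replace (x0 + h - x0) with h by ring. replace (x0 - (x0 - h)) with h by ring.
    pose proof (fine_identity A b0 (b x0) eps h x0 ltac:(lra) Hhp ltac:(apply HbB; lra)) as FI.
    cbv beta zeta in FI. rewrite FI. clear FI.
    destruct (HbB x0 Hx0) as [Hbx1 Hbx2].
    assert (FB := fine_bound A b0 (b x0) eps h x0 L Bm T0 beta ltac:(lra) Hhp ltac:(lra) ltac:(lra)
       ltac:(lra) ltac:(rewrite Rabs_minus_sym; apply Hlip; lra) HL0).
    assert (0 <= h / eps) by (apply Rdiv_le_0_compat; lra).
    eapply Rle_trans. apply FB.
    + replace (b x0 * h / eps) with (b x0 * (h / eps)) by (field; lra).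
      unfold T0. apply Rmult_le_compat; lra.
    + replace (b0 * h / eps) with (b0 * (h / eps)) by (field; lra).
      unfold T0. apply Rmult_le_compat; lra.
    + lra.
    + fold c3 Pc dl. rewrite Hhe.
      assert (He1 : 0 < exp (- beta * x0 / eps)) by apply exp_pos.
      replace ((r0 * ln Nr / Nr) ^ 2) with (r0 ^ 2 * / Nr ^ 2 * ln Nr ^ 2) by (field; lra).
      assert (0 <= Pc * (1 + 256 / dl ^ 4)).
      { apply Rmult_le_pos. lra. assert (0 < dl^4) by (apply pow_lt; lra).
        assert (0 <= 256 / dl^4) by (apply Rdiv_le_0_compat; lra). lra. }
      assert (0 < / Nr ^ 2) by (apply Rinv_0_lt_compat; apply pow_lt; lra).
      assert (0 < ln Nr ^ 2) by (apply pow_lt; lra).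
      set (W := / Nr ^ 2 * ln Nr ^ 2 * exp (- beta * x0 / eps)).
      assert (HW : 0 < W) by (unfold W; apply Rmult_lt_0_compat; [apply Rmult_lt_0_compat|]; lra).
      replace (Rabs A * (r0 ^ 2 * / Nr ^ 2 * ln Nr ^ 2) * (Pc * (1 + 256 / dl ^ 4)) * exp (- beta * x0 / eps))
        with (Rabs A * (r0 ^ 2 * (Pc * (1 + 256 / dl ^ 4))) * W) by (unfold W; ring).
      replace ((Cfi + Cco) * / Nr ^ 2 * ln Nr ^ 2 * exp (- beta * x0 / eps)) with ((Cfi + Cco) * W) by (unfold W; ring).
      apply Rmult_le_compat_r. lra.
      unfold Cfi. 
      assert (Rabs A * (r0 ^ 2 * (Pc * (1 + 256 / dl ^ 4))) <= KA * (r0 ^ 2 * (Pc * (1 + 256 / dl ^ 4)))).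
      { apply Rmult_le_compat_r. apply Rmult_le_pos. apply pow_le; lra. lra. lra. }
      replace (KA * r0 ^ 2 * (Pc * (1 + 256 / dl ^ 4))) with (KA * (r0 ^ 2 * (Pc * (1 + 256 / dl ^ 4)))) by ring.
      lra.
  - intros [Hi1 Hi2].
    set (H := (1 - xi0) / (Nr - INR J)).
    assert (HNJ : Nr - INR J = (1 - Q) * Nr) by (rewrite HJ; ring).
    assert (HH : / Nr <= H).
    { unfold H. rewrite HNJ. apply Rmult_le_reg_r with ((1 - Q) * Nr). nra.
      field_simplify; try lra. }
    assert (HHp : 0 < H) by (assert (0 < / Nr) by (apply Rinv_0_lt_compat; lra); lra).
    assert (Hm0 : mesh beta a eps Nr N J i = xi0 + (INR i - INR J) * H) by (apply mesh_ge; lia).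
    assert (Hmp : mesh beta a eps Nr N J (S i) = xi0 + (INR i - INR J) * H + H).
    { rewrite mesh_gt by lia. rewrite S_INR. unfold H, xi0, Nr. ring. }
    set (x0 := xi0 + (INR i - INR J) * H) in *.
    set (xm := mesh beta a eps Nr N J (i - 1)).
    assert (Hxm : xi0 - h <= xm < x0).
    { unfold xm. destruct (Nat.eq_dec i J) as [->|Hn].
      - rewrite mesh_le by lia. rewrite minus_INR by lia. fold xi0 h. unfold x0.
        assert (INR J * h = xi0) by (unfold h; field; lra). simpl. nra.
      - rewrite mesh_ge by lia. rewrite minus_INR by lia. change (INR N) with Nr. fold xi0 H. unfold x0. simpl.
        assert (INR J <= INR (i - 1)) by (apply le_INR; lia). rewrite minus_INR in H0 by lia. simpl in H0.
        assert (0 <= (INR i - 1 - INR J) * H) by (apply Rmult_le_pos; lra). nra. }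
    assert (Hx0 : xi0 <= x0 <= 1 - H).
    { unfold x0. assert (INR J <= INR i) by (apply le_INR; lia).
      assert (Hq : INR i <= INR (N - 1)) by (apply le_INR; lia). rewrite minus_INR in Hq by lia. simpl in Hq.
      change (INR N) with Nr in Hq.
      assert (0 <= (INR i - INR J) * H) by (apply Rmult_le_pos; lra). split. lra.
      assert ((INR i - INR J) * H <= (Nr - 1 - INR J) * H) by (apply Rmult_le_compat_r; lra).
      assert ((Nr - INR J) * H = 1 - xi0) by (unfold H; field; lra). nra. }
    assert (Hx01 : 0 <= x0 <= 1) by lra.
    unfold tau. cbv zeta. rewrite Hm0, Hmp, !HD1, !HD2, !Hv. fold xm.
    destruct (HbB x0 Hx01) as [Hbx1 Hbx2].
    pose proof (coarse_bound A b0 (b x0) eps xm x0 (x0 + H) Bm L ltac:(lra) ltac:(lra) ltac:(lra)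
      ltac:(lra) ltac:(apply Hlip; lra) HL0) as CB.
    cbv beta zeta in CB. eapply Rle_trans. apply CB. clear CB.
    replace (x0 + H - x0) with H by ring.
    assert (HRp : Rpower Nr (- a) = exp (- a * ln Nr)) by reflexivity.
    assert (B1 : exp (- b0 * xm / eps) / H <= exp (b0 * r0) * Rpower Nr (- a)).
    { assert (E1 : exp (- b0 * xm / eps) <= exp (- (a * b0 / beta) * ln Nr) * exp (b0 * r0)).
      { rewrite <- exp_plus. apply exp_le_mono.
        assert (b0 * (h / eps) <= b0 * r0) by (apply Rmult_le_compat_l; lra).
        assert (Hq : - b0 * xm / eps <= - b0 * (xi0 - h) / eps).
        { unfold Rdiv. apply Rmult_le_compat_r. left; apply Rinv_0_lt_compat; lra. nra. }
        replace (- b0 * (xi0 - h) / eps) with (- (a * b0 / beta) * ln Nr + b0 * (h / eps)) in Hq.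
        lra. rewrite Hxi0. field. lra. }
      assert (E2 : / H <= Nr).
      { apply Rmult_le_reg_l with H. lra. rewrite Rinv_r by lra.
        apply Rmult_le_reg_l with (/ Nr). apply Rinv_0_lt_compat; lra.
        field_simplify; lra. }
      assert (E3 : exp (- (a * b0 / beta) * ln Nr) * Nr <= Rpower Nr (- a)).
      { rewrite HRp. rewrite <- (exp_ln Nr) at 2 by lra. rewrite <- exp_plus. apply exp_le_mono.
        assert (- (a * b0 / beta) + 1 <= - a).
        { apply Rmult_le_reg_l with beta. lra. field_simplify; try lra. unfold dl in Ha'. nra. }
        nra. }
      assert (0 < exp (- b0 * xm / eps)) by apply exp_pos.
      assert (0 < exp (b0 * r0)) by apply exp_pos.
      assert (0 < exp (- (a * b0 / beta) * ln Nr)) by apply exp_pos.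
      unfold Rdiv. 
      apply Rle_trans with (exp (- (a * b0 / beta) * ln Nr) * exp (b0 * r0) * Nr).
      apply Rmult_le_compat; try lra. left; apply Rinv_0_lt_compat; lra.
      replace (exp (- (a * b0 / beta) * ln Nr) * exp (b0 * r0) * Nr)
        with (exp (b0 * r0) * (exp (- (a * b0 / beta) * ln Nr) * Nr)) by ring.
      apply Rmult_le_compat_l; lra. }
    assert (B2 : x0 / eps * exp (- b0 * x0 / eps) <= / dl * Rpower Nr (- a)).
    { set (y := x0 / eps).
      assert (Hy : 0 <= y) by (unfold y; apply Rdiv_le_0_compat; lra).
      assert (EE : exp (- b0 * x0 / eps) = exp (- (dl * y)) * exp (- beta * y)).
      { rewrite <- exp_plus. f_equal. unfold y, dl. field. lra. }
      rewrite EE. assert (Y := y_exp dl y Hdl Hy).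
      assert (Ey : exp (- beta * y) <= Rpower Nr (- a)).
      { rewrite HRp. apply exp_le_mono.
        assert (a * ln Nr <= beta * y).
        { unfold y. apply Rmult_le_reg_l with (eps / beta). apply Rdiv_lt_0_compat; lra.
          replace (eps / beta * (beta * (x0 / eps))) with x0 by (field; lra).
          rewrite Hxi0 in Hx0. replace (eps / beta * (a * ln Nr)) with (a * eps / beta * ln Nr) by (field; lra). lra. }
        lra. }
      assert (0 < exp (- beta * y)) by apply exp_pos.
      replace (y * (exp (- (dl * y)) * exp (- beta * y))) with ((y * exp (- (dl * y))) * exp (- beta * y)) by ring.
      apply Rmult_le_compat; try lra. apply Rmult_le_pos. lra. left; apply exp_pos.
      }
    assert (HRP : 0 < Rpower Nr (- a)) by (rewrite HRp; apply exp_pos).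
    assert (0 <= exp (- b0 * xm / eps) / H) by (apply Rdiv_le_0_compat; [left; apply exp_pos| lra]).
    assert (0 <= x0 / eps * exp (- b0 * x0 / eps)) by (apply Rmult_le_pos; [apply Rdiv_le_0_compat; lra| left; apply exp_pos]).
    assert (S1 : (4 * b0 + Bm) * exp (- b0 * xm / eps) / H + b0 * L * (x0 / eps) * exp (- b0 * x0 / eps)
       <= ((4 * b0 + Bm) * exp (b0 * r0) + b0 * L / dl) * Rpower Nr (- a)).
    { replace ((4 * b0 + Bm) * exp (- b0 * xm / eps) / H) with ((4 * b0 + Bm) * (exp (- b0 * xm / eps) / H)) by (field; lra).
      replace (b0 * L * (x0 / eps) * exp (- b0 * x0 / eps)) with ((b0 * L) * (x0 / eps * exp (- b0 * x0 / eps))) by ring.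
      assert (T1 : (4 * b0 + Bm) * (exp (- b0 * xm / eps) / H) <= (4 * b0 + Bm) * (exp (b0 * r0) * Rpower Nr (- a)))
        by (apply Rmult_le_compat_l; lra).
      assert (T2 : (b0 * L) * (x0 / eps * exp (- b0 * x0 / eps)) <= (b0 * L) * (/ dl * Rpower Nr (- a)))
        by (apply Rmult_le_compat_l; nra).
      replace (((4 * b0 + Bm) * exp (b0 * r0) + b0 * L / dl) * Rpower Nr (- a))
        with ((4 * b0 + Bm) * (exp (b0 * r0) * Rpower Nr (- a)) + (b0 * L) * (/ dl * Rpower Nr (- a))) by (field; lra).
      lra. }
    assert (0 <= (4 * b0 + Bm) * exp (- b0 * xm / eps) / H + b0 * L * (x0 / eps) * exp (- b0 * x0 / eps)).
    { replace ((4 * b0 + Bm) * exp (- b0 * xm / eps) / H) with ((4 * b0 + Bm) * (exp (- b0 * xm / eps) / H)) by (field; lra).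
      assert (0 <= (4 * b0 + Bm) * (exp (- b0 * xm / eps) / H)) by (apply Rmult_le_pos; lra).
      assert (0 <= b0 * L * (x0 / eps * exp (- b0 * x0 / eps))) by (apply Rmult_le_pos; nra). nra. }
    apply Rle_trans with (KA * (((4 * b0 + Bm) * exp (b0 * r0) + b0 * L / dl) * Rpower Nr (- a))).
    apply Rmult_le_compat; try lra. apply Rabs_pos.
    replace (KA * (((4 * b0 + Bm) * exp (b0 * r0) + b0 * L / dl) * Rpower Nr (- a))) with (Cco * Rpower Nr (- a))
      by (unfold Cco; ring).
    apply Rmult_le_compat_r; lra.
Qed.
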